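(* Let $\mathbf i,\mathbf i'\in I^{(\infty)}$ be related by a 6-move $\mathbf i'=\zeta_k\mathbf i$. Then $$\widetilde B^{\mathbf i'}=\sigma_{k+4}\sigma_{k+2}\sigma_k\,\mu_k\mu_{k+3}\mu_{k+2}\mu_k\mu_{k+1}\mu_{k+3}\mu_k\mu_{k+2}\mu_{k+1}\mu_k\,\widetilde B^{\mathbf i}$$ (mutations applied right to left: in directions $k,k+1,k+2,k,k+3,k+1,k,k+2,k+3,k$, then the permutations).
   Context: Let $\mathfrak g$ be a complex finite-dimensional simple Lie algebra with index set $I$ and Cartan matrix $\mathsf C=(\mathsf c_{i,j})_{i,j\in I}$. $\mathbb N=\{1,2,\dots\}$, $[a]_+=\max(a,0)$. $I^{(\infty)}$ is the set of sequences $\mathbf i=(i_u)_{u\in\mathbb N}\in I^{\mathbb N}$ in which every element of $I$ occurs infinitely often; $u^+=\min\{v>u:i_v=i_u\}$, $u^-=\max(\{v<u:i_v=i_u\}\cup\{0\})$. The exchange matrix $\widetilde B^{\mathbf i}=(b_{u,v})_{u,v\in\mathbb N}$: $b_{u,v}=1$ if $v=u^+$; $-1$ if $v=u^-$; $\mathsf c_{i_u,i_v}$ if $u<v<u^+<v^+$; $-\mathsf c_{i_u,i_v}$ if $v<u<v^+<u^+$; $0$ otherwise. Matrix mutation: $\mu_k(\widetilde B)=E\widetilde BF$ with $e_{u,v}=\delta_{u,v}$ ($v\ne k$), $e_{k,k}=-1$, $e_{u,k}=[-b_{u,k}]_+$ ($u\ne k$), $f_{u,v}=\delta_{u,v}$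 ($u\ne k$), $f_{k,k}=-1$, $f_{k,v}=[b_{k,v}]_+$ ($v\ne k$). For a permutation $\pi$ of $\mathbb N$, $(\pi\widetilde B)_{u,v}=b_{\pi^{-1}(u),\pi^{-1}(v)}$; $\sigma_k$ is the transposition of $k,k+1$. A 6-move $\mathbf i'=\zeta_k\mathbf i$ means $i_k=i_{k+2}=i_{k+4}=i'_{k+1}=i'_{k+3}=i'_{k+5}$, $i_{k+1}=i_{k+3}=i_{k+5}=i'_k=i'_{k+2}=i'_{k+4}$, $i_u=i'_u$ for $u\notin[k,k+5]$, and $\mathsf c_{i_{k+1},i_k}\mathsf c_{i_k,i_{k+1}}=3$ (so $\mathfrak g$ is of type $G_2$). *)

(* Defs.v *)
From mathcomp Require Import all_boot all_order all_algebra.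
From Stdlib Require Import ClassicalEpsilon.
Set Implicit Arguments.
Unset Strict Implicit.
Unset Printing Implicit Defensive.
Import Order.TTheory GRing.Theory Num.Theory.
Local Open Scope ring_scope.

(* ---------- Cartan matrices of finite-dimensional complex simple Lie algebras ----------
   Classical characterization: an indecomposable generalized Cartan matrix of
   finite type, i.e. c_ii = 2, c_ij <= 0 (i <> j), c_ij = 0 <-> c_ji = 0,
   symmetrizable by a positive diagonal D with D C positive definite, and
   indecomposable, on a nonempty index set. *)
Definition simple_cartan_matrix (I : finType) (C : I -> I -> int) : Prop :=
  (0 < #|I|)%N /\
  [/\ (forall i, C i i = 2),
      (forall i j, i != j -> C i j <= 0),
      (forall i j, C i j = 0 <-> C j i = 0),
      (exists d : I -> rat,
          (forall i, 0 < d i) /\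
          (forall i j, d i * (C i j)%:~R = d j * (C j i)%:~R) /\
          (forall x : I -> rat, (exists i, x i != 0) ->
             0 < \sum_i \sum_j x i * d i * (C i j)%:~R * x j))
    & (forall J : {set I}, J != set0 -> J != setT ->
         exists i j, [/\ i \in J, j \notin J & C i j != 0])].

(* ---------- Sequences in I^(infinity) ----------
   N = {1,2,...} is represented by positive nats; the value of a sequence at 0
   is irrelevant. *)
Definition inf_often (I : eqType) (s : nat -> I) : Prop :=
  forall (j : I) (n : nat), exists m, (n < m)%N /\ s m = j.

Definition is_uplus (I : eqType) (s : nat -> I) (u v : nat) : Prop :=
  (u < v)%N /\ s v = s u /\ (forall w, (u < w < v)%N -> s w <> s u).

Definition uplus (I : eqType) (s : nat -> I) (u : nat) : nat :=
  epsilon (inhabits 0%N) (is_uplus s u).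

(* u^- = max ({ v < u : i_v = i_u } U {0}) , v ranging over N = {1,2,...} *)
Definition uminus (I : eqType) (s : nat -> I) (u : nat) : nat :=
  (\max_(v < u | (0 < v)%N && (s v == s u)) v)%N.

Definition exch_matrix (I : finType) (C : I -> I -> int) (s : nat -> I)
  (u v : nat) : int :=
  if (u == 0)%N || (v == 0)%N then 0 else
  if v == uplus s u then 1 else
  if v == uminus s u then -1 else
  if (u < v)%N && (v < uplus s u)%N && (uplus s u < uplus s v)%N then C (s u) (s v) else
  if (v < u)%N && (u < uplus s v)%N && (uplus s v < uplus s u)%N then - C (s u) (s v) else
  0.

Definition pos_part (a : int) : int := if 0 <= a then a else 0.

(* Matrix mutation mu_k(B) = E B F; E (resp. F) has off-diagonal support only in
   column (resp. row) k, so the infinite matrix product reduces to these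
   finite sums over indices in N = {1,2,...}. *)
Definition mut_E (b : nat -> nat -> int) (k u w : nat) : int :=
  if w != k then (if u == w then 1 else 0)
  else if u == k then -1 else pos_part (- b u k).

Definition mut_F (b : nat -> nat -> int) (k x v : nat) : int :=
  if x != k then (if x == v then 1 else 0)
  else if v == k then -1 else pos_part (b k v).

Definition mutate (k : nat) (b : nat -> nat -> int) (u v : nat) : int :=
  \sum_(1 <= w < (maxn u k).+1) \sum_(1 <= x < (maxn v k).+1)
     mut_E b k u w * b w x * mut_F b k x v.

(* transposition sigma_k of k and k+1, and the action (pi B)_{u,v} = b_{pi^-1 u, pi^-1 v} *)
Definition sigma (k u : nat) : nat :=
  if u == k then k.+1 else if u == k.+1 then k else u.

Definition perm_act (k : nat) (b : nat -> nat -> int) (u v : nat) : int :=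
  b (sigma k u) (sigma k v).  (* sigma_k^{-1} = sigma_k *)

Definition six_move (I : finType) (C : I -> I -> int) (k : nat) (s s' : nat -> I) : Prop :=
  [/\ (1 <= k)%N,
      s k = s (k + 2)%N /\ s (k + 2)%N = s (k + 4)%N /\ s (k + 4)%N = s' (k + 1)%N /\
      s' (k + 1)%N = s' (k + 3)%N /\ s' (k + 3)%N = s' (k + 5)%N,
      s (k + 1)%N = s (k + 3)%N /\ s (k + 3)%N = s (k + 5)%N /\ s (k + 5)%N = s' k /\
      s' k = s' (k + 2)%N /\ s' (k + 2)%N = s' (k + 4)%N,
      (forall u, (1 <= u)%N -> (u < k)%N || (k + 5 < u)%N -> s u = s' u)
    & C (s (k + 1)%N) (s k) * C (s k) (s (k + 1)%N) = 3].

(* Main.v *)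
Require Import Defs.
From mathcomp Require Import all_boot all_order all_algebra.
From mathcomp Require Import zify ring.
From Stdlib Require Import ClassicalEpsilon.
Set Implicit Arguments.
Unset Strict Implicit.
Unset Printing Implicit Defensive.
Import Order.TTheory GRing.Theory Num.Theory.
Local Open Scope ring_scope.

Definition Fn (L : Type) (C : L -> L -> int) (lu lv : L) (u v up vp : nat) : int :=
  if v == up then 1 else if u == vp then -1 else
  if (u < v)%N && (v < up)%N && (up < vp)%N then C lu lv else
  if (v < u)%N && (u < vp)%N && (vp < up)%N then - C lu lv else 0.

Section Uplus.
Variables (I : eqType) (s : nat -> I).
Hypothesis hs : inf_often s.

Lemma exists_uplus u : exists v, is_uplus s u v.
Proof.
have [m [hm1 hm2]] := hs (s u) u.
have ex : exists n, (u < n)%N && (s n == s u) by exists m; rewrite hm1 hm2 eqxx.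
case: (ex_minnP ex) => n /andP [h1 /eqP h2] hmin.
exists n; split => //; split => // w /andP [hw1 hw2] hw.
have := hmin w; rewrite hw1 hw eqxx => /(_ isT). by rewrite leqNgt hw2.
Qed.

Lemma uplus_spec u : is_uplus s u (uplus s u).
Proof. rewrite /uplus; apply: epsilon_spec; exact: exists_uplus. Qed.

Lemma is_uplus_uniq u v1 v2 : is_uplus s u v1 -> is_uplus s u v2 -> v1 = v2.
Proof.
move=> [a1 [b1 c1]] [a2 [b2 c2]]; case: (ltngtP v1 v2) => // h.
- by exfalso; apply: (c2 v1) => //; rewrite a1 h.
- by exfalso; apply: (c1 v2) => //; rewrite a2 h.
Qed.

Lemma uplus_eq u v : is_uplus s u v -> uplus s u = v.
Proof. by move=> h; apply: is_uplus_uniq (uplus_spec u) h. Qed.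

Lemma uplus_gt u : (u < uplus s u)%N.
Proof. by case: (uplus_spec u). Qed.

Lemma uplus_s u : s (uplus s u) = s u.
Proof. by case: (uplus_spec u) => _ []. Qed.

Lemma uplus_min u w : (u < w < uplus s u)%N -> s w <> s u.
Proof. by case: (uplus_spec u) => _ [] _; apply. Qed.

Lemma uplus_inj p q : uplus s p = uplus s q -> p = q.
Proof.
move=> h; case: (ltngtP p q) => // hpq; exfalso.
- apply: (@uplus_min p q); first by rewrite hpq h uplus_gt.
  by rewrite -uplus_s -h uplus_s.
- apply: (@uplus_min q p); first by rewrite hpq -h uplus_gt.
  by rewrite -uplus_s h uplus_s.
Qed.

Lemma uminus_eq u v : (1 <= v)%N -> (v == uminus s u) = (u == uplus s v).
Proof.
move=> hv; apply/idP/idP => [/eqP hvu|/eqP hu].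
- rewrite hvu /uminus. rewrite hvu /uminus in hv.
  case: (pickP (fun i : 'I_u => (0 < i)%N && (s i == s u))) => [i0 Pi0|hnone].
  + rewrite (bigop.bigmax_eq_arg i0) //.
    case: arg_maxnP => // j /andP [hj1 /eqP hj2] hmax.
    apply/eqP; symmetry; apply: uplus_eq; split => //; split => // w /andP [hw1 hw2] hw.
    have := hmax (Ordinal hw2); rewrite /= hw hj2 eqxx andbT.
    have -> : (0 < w)%N by apply: leq_ltn_trans hw1.
    by move=> /(_ isT); rewrite leqNgt hw1.
  + exfalso; move: hv.
    have : (\max_(v < u | (0 < v)%N && (s v == s u)) v <= 0)%N.
      by apply/bigop.bigmax_leqP => i; rewrite hnone.
    move=> H1 H2. have := leq_trans H2 H1. by [].
- have [h1 [h2 h3]] : is_uplus s v u by rewrite hu; apply: uplus_spec.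
  apply/eqP/anti_leq/andP; rewrite /uminus; split.
  + by apply: (bigop.leq_bigmax_cond (Ordinal h1)); rewrite /= hv h2 eqxx.
  + apply/bigop.bigmax_leqP => i /andP [hi0 /eqP hi]; rewrite leqNgt; apply/negP => hvi.
    by apply: (h3 i); [rewrite hvi ltn_ord | rewrite hi h2].
Qed.

End Uplus.

Lemma exch_Fn (I : finType) (C : I -> I -> int) (s : nat -> I) u v :
  inf_often s -> (1 <= u)%N -> (1 <= v)%N ->
  exch_matrix C s u v = Fn C (s u) (s v) u v (uplus s u) (uplus s v).
Proof.
move=> hs hu hv; rewrite /exch_matrix /Fn.
have -> : (u == 0)%N = false by case: u hu.
have -> : (v == 0)%N = false by case: v hv.
by rewrite /= (uminus_eq hs).
Qed.

Lemma sum_one (m n a : nat) (c : int) : (m <= a < n)%N ->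
  \sum_(m <= x < n) (if x == a then c else 0) = c.
Proof.
move=> /andP [h1 h2].
rewrite (bigD1_seq a) /=; last by apply: iota_uniq.
  by rewrite eqxx big1 ?addr0 // => i /negbTE ->.
by rewrite mem_iota h1 /= subnKC // (leq_trans h1) // ltnW.
Qed.

Definition locmut (b : nat -> nat -> int) (k p q : nat) : int :=
  if p == k then (if q == k then b k k else -(b k q + b k k * pos_part (b k q)))
  else if q == k then -(b p k + pos_part (- b p k) * b k k)
  else b p q + pos_part (- b p k) * b k q + b p k * pos_part (b k q)
       + pos_part (- b p k) * b k k * pos_part (b k q).

Lemma sumF (b : nat -> nat -> int) k q w : (1 <= k)%N -> (1 <= q)%N ->
  \sum_(1 <= x < (maxn q k).+1) b w x * mut_F b k x q =
  (if q == k then - b w k else b w q + b w k * pos_part (b k q)).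
Proof.
move=> hk hq.
have -> : \sum_(1 <= x < (maxn q k).+1) b w x * mut_F b k x q =
  \sum_(1 <= x < (maxn q k).+1) ((if x == k then b w k * (if q == k then -1 else pos_part (b k q)) else 0)
     + (if x == q then (if q == k then 0 else b w q) else 0)).
  apply: eq_bigr => x _; rewrite /mut_F.
  case: (eqVneq x k) => [->|hxk] /=.
  - by case: (eqVneq k q) => [->|]; rewrite ?eqxx ?addr0 //; case: eqP => //; rewrite addr0.
  - case: (eqVneq x q) => [<-|hxq]; rewrite ?mulr1 ?mulr0 ?add0r //.
    by rewrite (negbTE hxk).
case: (eqVneq q k) => [hqk|hqk].
- under eq_bigr => x _ do rewrite if_same addr0.
  by rewrite sum_one ?mulrN1 //; lia.
- by rewrite big_split /= !sum_one //; lia.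
Qed.

Lemma mutate_loc (b : nat -> nat -> int) k p q : (1 <= k)%N -> (1 <= p)%N -> (1 <= q)%N ->
  mutate k b p q = locmut b k p q.
Proof.
move=> hk hp hq; rewrite /mutate.
under eq_bigr => w _ do (under eq_bigr => x _ do rewrite -mulrA; rewrite -mulr_sumr sumF //).
have -> : \sum_(1 <= i < (maxn p k).+1) mut_E b k p i *
     (if q == k then - b i k else b i q + b i k * pos_part (b k q)) =
  \sum_(1 <= i < (maxn p k).+1) ((if i == k then (if p == k then -1 else pos_part (- b p k)) *
     (if q == k then - b k k else b k q + b k k * pos_part (b k q)) else 0)
    + (if i == p then (if p == k then 0 else (if q == k then - b p k else b p q + b p k * pos_part (b k q))) else 0)).
  apply: eq_bigr => w _; rewrite /mut_E.
  case: (eqVneq w k) => [->|hwk] /=.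
  - by case: (eqVneq p k) => _; rewrite addr0.
  - case: (eqVneq p w) => [hpw|hpw].
    + by subst; rewrite (negbTE hwk) mul1r add0r.
    + by rewrite mul0r add0r.
case: (eqVneq p k) => [hpk|hpk].
- under eq_bigr => x _ do rewrite if_same addr0.
  rewrite sum_one; last by lia.
  rewrite /locmut hpk eqxx; case: (eqVneq q k) => [hqk|hqk]; rewrite ?mulN1r ?opprK //.
- rewrite big_split /= !sum_one; try lia.
  rewrite /locmut (negbTE hpk); case: (eqVneq q k) => [hqk|hqk].
  + subst; ring.
  + ring.
Qed.

Ltac split_if := match goal with |- context [if ?c then _ else _] =>
  lazymatch c with context [if _ then _ else _] => fail | _ => let H := fresh "H" in case H : c end end.

Definition piw (k u : nat) : nat := sigma k (sigma (k + 2) (sigma (k + 4) u)).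

Definition win (k u : nat) : bool := (k <= u <= k + 5)%N.

Lemma piwE k u : piw k u =
  (if u == k then k + 1 else if u == k + 1 then k else
   if u == k + 2 then k + 3 else if u == k + 3 then k + 2 else
   if u == k + 4 then k + 5 else if u == k + 5 then k + 4 else u)%N.
Proof.
rewrite /piw /sigma; repeat split_if; lia.
Qed.

Lemma pi_invol k u : piw k (piw k u) = u.
Proof. rewrite !piwE; repeat split_if; lia. Qed.

Lemma pi_out k u : ~~ win k u -> piw k u = u.
Proof. rewrite /win piwE; repeat split_if; lia. Qed.

Lemma pi_ge1 k u : (1 <= k)%N -> (1 <= u)%N -> (1 <= piw k u)%N.
Proof. rewrite piwE; repeat split_if; lia. Qed.

Lemma pi_win k u : win k (piw k u) = win k u.
Proof. rewrite /win piwE; repeat split_if; lia. Qed.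

Lemma pi_mono k u w : (u < w)%N -> (piw k u < piw k w)%N \/ u = piw k w.
Proof. rewrite !piwE; repeat split_if; lia. Qed.

Lemma pi_ltout k z w : ~~ win k z -> (z < piw k w)%N = (z < w)%N.
Proof. rewrite /win piwE; repeat split_if; lia. Qed.

Lemma pi_gtout k z w : ~~ win k z -> (piw k w < z)%N = (w < z)%N.
Proof. rewrite /win piwE; repeat split_if; lia. Qed.

Lemma pi_eqout k z w : ~~ win k z -> (piw k w == z) = (w == z).
Proof. rewrite /win piwE; repeat split_if; lia. Qed.

Section Window.
Variables (I : finType) (C : I -> I -> int) (s s' : nat -> I) (k : nat).
Hypothesis hC : simple_cartan_matrix C.
Hypothesis hs : inf_often s.
Hypothesis hs' : inf_often s'.
Hypothesis h6 : six_move C k s s'.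

Lemma hk1 : (1 <= k)%N. Proof. by case: h6. Qed.

Lemma s2 : s (k + 2)%N = s k. Proof. by case: h6 => _ [? _]. Qed.
Lemma s4 : s (k + 4)%N = s k. Proof. by case: h6 => _ [? [? _]]; congruence. Qed.
Lemma s3 : s (k + 3)%N = s (k + 1)%N. Proof. by case: h6 => _ _ [? _]. Qed.
Lemma s5 : s (k + 5)%N = s (k + 1)%N. Proof. by case: h6 => _ _ [? [? _]]; congruence. Qed.

Lemma ab_neq : s k != s (k + 1)%N.
Proof.
apply/eqP => hab; case: h6 => _ _ _ _ h3; move: h3; rewrite -hab.
case: hC => _ [hd _ _ _ _]; rewrite hd. by [].
Qed.

Lemma s'_pi u : (1 <= u)%N -> s' u = s (piw k u).
Proof.
move=> hu; case: h6 => hk [e1 [e2 [e3 [e4 e5]]]] [f1 [f2 [f3 [f4 f5]]]] hout _.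
rewrite piwE; repeat (case: ifP => /eqP ?); subst; try congruence.
symmetry; apply: hout => //. lia.
Qed.

Lemma s_adj u : piw k u != u -> s (piw k u) != s u.
Proof.
have := ab_neq; rewrite piwE; repeat (case: ifP => /eqP ?); subst => //;
rewrite ?s2 ?s3 ?s4 ?s5 // ?[_ == s k]eq_sym //; try by move=> _ /eqP.
Qed.

Lemma up_aux j : (s (k + j + 2)%N = s (k + j)%N) -> (s (k + j + 1)%N != s (k + j)%N) ->
  uplus s (k + j) = (k + j + 2)%N.
Proof.
move=> e1 e2; apply: uplus_eq => //; split; first lia; split => // w hw.
have -> : w = (k + j + 1)%N by lia.
by apply/eqP.
Qed.

Lemma uplus_w0 : uplus s k = (k + 2)%N.
Proof. have := @up_aux 0; rewrite !addn0 s2; apply => //; rewrite eq_sym; exact: ab_neq. Qed.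
Lemma uplus_w1 : uplus s (k + 1) = (k + 3)%N.
Proof. have := @up_aux 1; rewrite -!addnA /= s3 s2; apply => //; exact: ab_neq. Qed.
Lemma uplus_w2 : uplus s (k + 2) = (k + 4)%N.
Proof. have := @up_aux 2; rewrite -!addnA /= s3 s2 s4; apply => //; rewrite eq_sym; exact: ab_neq. Qed.
Lemma uplus_w3 : uplus s (k + 3) = (k + 5)%N.
Proof. have := @up_aux 3; rewrite -!addnA /= s3 s4 s5; apply => //; exact: ab_neq. Qed.

End Window.

Section S4.
Variables (I : finType) (C : I -> I -> int) (s s' : nat -> I) (k : nat).
Hypothesis hC : simple_cartan_matrix C.
Hypothesis hs : inf_often s.
Hypothesis hs' : inf_often s'.
Hypothesis h6 : six_move C k s s'.

Lemma adj_eq z : s (piw k z) = s z -> piw k z = z.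
Proof. move=> e; case: (eqVneq (piw k z) z) => // /(s_adj hC h6); by rewrite e eqxx. Qed.

Lemma uplus_s' u : (1 <= u)%N -> uplus s' u = piw k (uplus s (piw k u)).
Proof.
move=> hu; have hk := hk1 h6.
set x := piw k u; set v := uplus s x.
have hxv : (x < v)%N by apply: uplus_gt.
have hsv : s v = s x by apply: uplus_s.
have hx1 : (1 <= x)%N by apply: pi_ge1.
have hv1 : (1 <= v)%N by lia.
have hpv1 : (1 <= piw k v)%N by apply: pi_ge1.
have ux : u = piw k x by rewrite pi_invol.
apply: uplus_eq => //; split; [|split].
- case: (pi_mono k hxv); first by rewrite -ux.
  move=> e; exfalso.
  have e2 : v = piw k x by rewrite e pi_invol.
  have := adj_eq (z:=x); rewrite -e2 hsv => /(_ erefl) h.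
  lia.
- by rewrite !(s'_pi h6) // pi_invol hsv.
- move=> w /andP [h1 h2] e; have hw1 : (1 <= w)%N by lia.
  move: e; rewrite !(s'_pi h6) // -/x => e.
  case: (pi_mono k h1) => [h1'|e1].
  + case: (pi_mono k h2) => [h2'|e2].
    * rewrite pi_invol in h2'.
      by apply: (@uplus_min _ s hs x (piw k w)); [rewrite h1' h2'|].
    * rewrite pi_invol in e2; subst w.
      have := adj_eq (z:=v); rewrite e hsv => /(_ erefl) h. lia.
  + have ew : w = x by rewrite /x e1 pi_invol.
    have h : piw k w = w by apply: adj_eq; rewrite e ew.
    lia.
Qed.

Lemma exch_s' u v : (1 <= u)%N -> (1 <= v)%N ->
  exch_matrix C s' u v = Fn C (s (piw k u)) (s (piw k v)) u v
     (piw k (uplus s (piw k u))) (piw k (uplus s (piw k v))).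
Proof.
move=> hu hv; rewrite exch_Fn // !uplus_s' // !(s'_pi h6) //.
Qed.

End S4.

Definition Mut10 (k : nat) (b : nat -> nat -> int) :=
  mutate k (mutate (k + 3) (mutate (k + 2) (mutate k (mutate (k + 1)
        (mutate (k + 3) (mutate k (mutate (k + 2) (mutate (k + 1) (mutate k b))))))))).

Lemma mut_inert_step (b : nat -> nat -> int) j x : (1 <= j)%N -> (1 <= x)%N -> x != j ->
  b x j = 0 -> b j x = 0 -> forall y, (1 <= y)%N -> mutate j b x y = b x y /\ mutate j b y x = b y x.
Proof.
move=> hj hx hxj e1 e2 y hy; rewrite !mutate_loc // /locmut (negbTE hxj) e1 e2.
case: (eqVneq y j) => [->|hyj]; rewrite ?e1 ?e2 /pos_part /=; split; try ring.
Qed.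

Section S5.
Variables (I : finType) (C : I -> I -> int) (s s' : nat -> I) (k : nat).
Hypothesis hC : simple_cartan_matrix C.
Hypothesis hs : inf_often s.
Hypothesis hs' : inf_often s'.
Hypothesis h6 : six_move C k s s'.

Let hk : (1 <= k)%N := hk1 h6.

Definition inert x := ~~ win k x && ~~ win k (uplus s x).

Definition rowcol (b : nat -> nat -> int) x :=
  forall y, (1 <= y)%N -> b x y = exch_matrix C s x y /\ b y x = exch_matrix C s y x.

Lemma uplusW w : (k <= w <= k + 3)%N -> uplus s w = (w + 2)%N.
Proof.
move=> hw.
have : w = k \/ w = (k + 1)%N \/ w = (k + 2)%N \/ w = (k + 3)%N by lia.
case=> [->|[->|[->|->]]].
- by rewrite (uplus_w0 hC hs h6).
- by rewrite (uplus_w1 hC hs h6) -addnA.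
- by rewrite (uplus_w2 hC hs h6) -addnA.
- by rewrite (uplus_w3 hC hs h6) -addnA.
Qed.

Lemma inert_zero x w : (1 <= x)%N -> inert x -> (k <= w <= k + 3)%N ->
  exch_matrix C s x w = 0 /\ exch_matrix C s w x = 0.
Proof.
move=> hx /andP [h1 h2] hw.
have hxp := uplus_gt hs x.
have hw1 : (1 <= w)%N by lia.
rewrite !exch_Fn // (uplusW hw) /Fn; move: h1 h2; rewrite /win => h1 h2.
split; repeat split_if; try reflexivity; exfalso; lia.
Qed.

Lemma rowcol_mut b j x : (1 <= x)%N -> inert x -> (k <= j <= k + 3)%N ->
  rowcol b x -> rowcol (mutate j b) x.
Proof.
move=> hx hi hj hr y hy; have hk0 := hk1 h6.
have hxj : x != j by apply/eqP => e; move/andP: hi => [hi1 _]; move: hi1; rewrite /win e; lia.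
have [z1 z2] := inert_zero hx hi hj.
have [e1 e2] := hr j ltac:(lia).
have hj1 : (1 <= j)%N by lia.
have [m1 m2] := mut_inert_step hj1 hx hxj (etrans e1 z1) (etrans e2 z2) hy.
rewrite m1 m2; exact: hr.
Qed.

Lemma Mut10_inert x : (1 <= x)%N -> inert x -> rowcol (Mut10 k (exch_matrix C s)) x.
Proof.
move=> hx hi; have hk0 := hk1 h6; rewrite /Mut10.
have r0 : rowcol (exch_matrix C s) x by [].
by repeat (apply: rowcol_mut => //; first lia).
Qed.

End S5.

Lemma Fn_inert_l (L : Type) (C : L -> L -> int) la lb k x y xp yp :
  ~~ win k x -> ~~ win k xp ->
  Fn C la lb (piw k x) (piw k y) (piw k xp) (piw k yp) = Fn C la lb x y xp yp.
Proof.
move=> h1 h2; rewrite (pi_out h1) (pi_out h2) /Fn.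
rewrite pi_eqout // [x == piw k yp]eq_sym pi_eqout // [x == yp]eq_sym.
by rewrite !pi_ltout // !pi_gtout.
Qed.

Lemma Fn_inert_r (L : Type) (C : L -> L -> int) la lb k x y xp yp :
  ~~ win k y -> ~~ win k yp ->
  Fn C la lb (piw k x) (piw k y) (piw k xp) (piw k yp) = Fn C la lb x y xp yp.
Proof.
move=> h1 h2; rewrite (pi_out h1) (pi_out h2) /Fn.
rewrite [y == piw k xp]eq_sym pi_eqout // [y == xp]eq_sym pi_eqout //.
by rewrite !pi_ltout // !pi_gtout.
Qed.

Definition mpos (t23 : nat) (i : nat) : nat :=
  match i with 0 => 5 + t23 | 1 => 6 - t23 | _ => i + 8 end%N.
Definition mplus (pq : nat) (i : nat) : nat :=
  match i with 0 => 10 | 1 => 11 | 2 => 12 | 3 => 13 | 4 => 14 | 5 => 15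
  | 6 => 20 + pq | _ => 21 - pq end%N.
Definition mlet (i : nat) : bool := match i with 0 => true | 1 => false | _ => ~~ odd i end.
Definition Cm (ca cb : int) (x y : bool) : int := if x == y then 2 else if x then ca else cb.

Definition T0 t23 pq ca cb : seq (seq int) :=
  mkseq (fun i => mkseq (fun j => Fn (Cm ca cb) (mlet i) (mlet j) (mpos t23 i) (mpos t23 j)
     (mplus pq i) (mplus pq j)) 8) 8.
Definition mpi (z : nat) : nat :=
  match z with 10 => 11 | 11 => 10 | 12 => 13 | 13 => 12 | 14 => 15 | 15 => 14 | _ => z end%N.
Definition mposT (t23 : nat) (i : nat) : nat :=
  match i with 0 => 5 + t23 | 1 => 6 - t23 | 2 => 11 | 3 => 10 | 4 => 13 | 5 => 12 | 6 => 15 | _ => 14 end%N.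
Definition mplusT (pq : nat) (i : nat) : nat :=
  match i with 0 => 11 | 1 => 10 | 2 => 13 | 3 => 12 | 4 => 15 | 5 => 14
  | 6 => 20 + pq | _ => 21 - pq end%N.
Definition Tt t23 pq ca cb : seq (seq int) :=
  mkseq (fun i => mkseq (fun j => Fn (Cm ca cb) (mlet i) (mlet j) (mposT t23 i) (mposT t23 j)
     (mplusT pq i) (mplusT pq j)) 8) 8.

Definition tget (T : seq (seq int)) (i j : nat) : int := nth 0 (nth [::] T i) j.
Definition tmut (j : nat) (T : seq (seq int)) : seq (seq int) :=
  mkseq (fun p => mkseq (fun q => locmut (tget T) j p q) 8) 8.
Definition MutM T := tmut 2 (tmut 5 (tmut 4 (tmut 2 (tmut 3 (tmut 5 (tmut 2 (tmut 4 (tmut 3 (tmut 2 T))))))))).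

Definition model_check t23 pq ca cb : bool :=
  MutM (T0 t23 pq ca cb) == Tt t23 pq ca cb.

Lemma model_ok t23 pq ca cb : (t23 <= 1)%N -> (pq <= 1)%N ->
  (ca = -1 /\ cb = -3) \/ (ca = -3 /\ cb = -1) ->
  MutM (T0 t23 pq ca cb) = Tt t23 pq ca cb.
Proof.
case: t23 => [|[|//]] _; case: pq => [|[|//]] _;
move=> h; apply/eqP; case: h => [[-> ->]|[-> ->]]; vm_compute; reflexivity.
Qed.

Definition Fn0 (c : int) (u v up vp : nat) : int :=
  if v == up then 1 else if u == vp then -1 else
  if (u < v)%N && (v < up)%N && (up < vp)%N then c else
  if (v < u)%N && (u < vp)%N && (vp < up)%N then - c else 0.

Lemma FnE (L : Type) (C : L -> L -> int) la lb u v up vp :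
  Fn C la lb u v up vp = Fn0 (C la lb) u v up vp.
Proof. by []. Qed.

Lemma Fn0_iso c u v up vp U V UP VP :
  (v == up) = (V == UP) -> (u == vp) = (U == VP) -> (u < v)%N = (U < V)%N ->
  (v < up)%N = (V < UP)%N -> (up < vp)%N = (UP < VP)%N -> (v < u)%N = (V < U)%N ->
  (u < vp)%N = (U < VP)%N -> (vp < up)%N = (VP < UP)%N ->
  Fn0 c u v up vp = Fn0 c U V UP VP.
Proof. by rewrite /Fn0 => -> -> -> -> -> -> -> ->. Qed.

Lemma pik0 k : piw k k = (k + 1)%N. Proof. rewrite piwE; repeat split_if; lia. Qed.
Lemma pik1 k : piw k (k + 1) = k. Proof. rewrite piwE; repeat split_if; lia. Qed.
Lemma pik2 k : piw k (k + 2) = (k + 3)%N. Proof. rewrite piwE; repeat split_if; lia. Qed.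
Lemma pik3 k : piw k (k + 3) = (k + 2)%N. Proof. rewrite piwE; repeat split_if; lia. Qed.
Lemma pik4 k : piw k (k + 4) = (k + 5)%N. Proof. rewrite piwE; repeat split_if; lia. Qed.
Lemma pik5 k : piw k (k + 5) = (k + 4)%N. Proof. rewrite piwE; repeat split_if; lia. Qed.

Section S7.
Variables (I : finType) (C : I -> I -> int) (s s' : nat -> I) (k : nat).
Hypothesis hC : simple_cartan_matrix C.
Hypothesis hs : inf_often s.
Hypothesis hs' : inf_often s'.
Hypothesis h6 : six_move C k s s'.

Definition gidx x := if win k x then (x - k + 2)%N else if uplus s x == k then 0%N else 1%N.

Lemma hdiag i : C i i = 2. Proof. by case: hC => _ [hd _ _ _ _]. Qed.

Lemma PQ_facts : [/\ (k + 5 < uplus s (k + 4))%N, (k + 5 < uplus s (k + 5))%N &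
   uplus s (k + 4) != uplus s (k + 5)].
Proof.
have hab := ab_neq hC h6.
have h4 := uplus_gt hs (k + 4); have h5 := uplus_gt hs (k + 5).
have e4 := uplus_s hs (k + 4); have e5 := uplus_s hs (k + 5).
rewrite (s4 h6) in e4; rewrite (s5 h6) in e5.
split.
- case: (eqVneq (uplus s (k + 4)) (k + 5)%N) => [e|ne]; last by lia.
  by move: hab; rewrite -e4 e (s5 h6) eqxx.
- done.
- apply/eqP => e; move: hab; by rewrite -e4 e e5 eqxx.
Qed.

Lemma out_plus x : (1 <= x)%N -> ~~ win k x -> win k (uplus s x) ->
  (x < k)%N /\ (uplus s x = k \/ uplus s x = (k + 1)%N).
Proof.
move=> hx h1 h2; have hg := uplus_gt hs x; move: h1 h2; rewrite /win => h1 h2.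
split; first lia.
have es := uplus_s hs x.
have : uplus s x = k \/ uplus s x = (k + 1)%N \/ uplus s x = (k + 2)%N \/
   uplus s x = (k + 3)%N \/ uplus s x = (k + 4)%N \/ uplus s x = (k + 5)%N by lia.
case=> [->|[->|[e|[e|[e|e]]]]]; [by left|by right|exfalso..].
- apply: (@uplus_min _ s hs x k); first by rewrite e; lia.
  by rewrite -es e (s2 h6).
- apply: (@uplus_min _ s hs x (k + 1)); first by rewrite e; lia.
  by rewrite -es e (s3 h6).
- apply: (@uplus_min _ s hs x (k + 2)); first by rewrite e; lia.
  by rewrite -es e (s4 h6) (s2 h6).
- apply: (@uplus_min _ s hs x (k + 3)); first by rewrite e; lia.
  by rewrite -es e (s5 h6) (s3 h6).
Qed.

Lemma classify x : (1 <= x)%N -> ~~ inert s k x ->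
  [\/ [/\ gidx x = 0%N, (x < k)%N, uplus s x = k & s x = s k],
       [/\ gidx x = 1%N, (x < k)%N, uplus s x = (k + 1)%N & s x = s (k + 1)%N],
       [\/ x = k /\ gidx x = 2%N, x = (k + 1)%N /\ gidx x = 3%N | x = (k + 2)%N /\ gidx x = 4%N]
     | [\/ x = (k + 3)%N /\ gidx x = 5%N,
           x = (k + 4)%N /\ gidx x = 6%N | x = (k + 5)%N /\ gidx x = 7%N]].
Proof.
move=> hx; rewrite /inert negb_and !negbK.
case hw: (win k x) => /= h.
- have : x = k \/ x = (k + 1)%N \/ x = (k + 2)%N \/ x = (k + 3)%N \/ x = (k + 4)%N \/ x = (k + 5)%N
    by move: hw; rewrite /win; lia.
  rewrite /gidx hw.
  case=> [->|[->|[->|[->|[->|->]]]]].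
  + by apply: Or43; apply: Or31; split => //; lia.
  + by apply: Or43; apply: Or32; split => //; lia.
  + by apply: Or43; apply: Or33; split => //; lia.
  + by apply: Or44; apply: Or31; split => //; lia.
  + by apply: Or44; apply: Or32; split => //; lia.
  + by apply: Or44; apply: Or33; split => //; lia.
- have es := uplus_s hs x.
  have [hlt [e|e]] := out_plus hx (negbT hw) h; rewrite /gidx hw e.
  + apply: Or41; split => //; first by rewrite eqxx.
    by rewrite -es e.
  + apply: Or42; split => //; first by case: eqP => //; lia.
    by rewrite -es e.
Qed.


Lemma agree0 x y t23 pq : (1 <= x)%N -> (1 <= y)%N -> ~~ inert s k x -> ~~ inert s k y ->
  (t23 <= 1)%N -> (pq <= 1)%N ->
  (gidx x = 0%N -> gidx y = 1%N -> (x < y)%N = (t23 == 0%N)) ->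
  (gidx x = 1%N -> gidx y = 0%N -> (y < x)%N = (t23 == 0%N)) ->
  (uplus s (k + 4) < uplus s (k + 5))%N = (pq == 0%N) ->
  exch_matrix C s x y = tget (T0 t23 pq (C (s k) (s (k + 1)%N)) (C (s (k + 1)%N) (s k))) (gidx x) (gidx y).
Proof.
move=> hx hy hix hiy ht0 hq0 ht1 ht2 hpq; rewrite exch_Fn //.
have hxy : (x == y) = (uplus s x == uplus s y).
  by apply/eqP/eqP => [->|/(uplus_inj hs)].
have [hP hQ hPQ] := PQ_facts.
have u0 := uplus_w0 hC hs h6; have u1 := uplus_w1 hC hs h6.
have u2 := uplus_w2 hC hs h6; have u3 := uplus_w3 hC hs h6.
have l2 := s2 h6; have l3 := s3 h6; have l4 := s4 h6; have l5 := s5 h6.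
case: (classify hx hix) => [[gx hxk ux sx]|[gx hxk ux sx]|[[ex gx]|[ex gx]|[ex gx]]|[[ex gx]|[ex gx]|[ex gx]]];
case: (classify hy hiy) => [[gy hyk uy sy]|[gy hyk uy sy]|[[ey gy]|[ey gy]|[ey gy]]|[[ey gy]|[ey gy]|[ey gy]]];
rewrite gx gy; move: ht1 ht2; rewrite gx gy => ht1 ht2;
try (have {ht1} ht1 := ht1 erefl erefl); try (have {ht2} ht2 := ht2 erefl erefl);
try subst x; try subst y;
rewrite ?ux ?uy ?sx ?sy ?u0 ?u1 ?u2 ?u3 ?l2 ?l3 ?l4 ?l5; rewrite ?ux ?uy in hxy;
rewrite /tget /T0 /= !FnE ?hdiag /=; apply: Fn0_iso; lia.
Qed.

Lemma agreeT x y t23 pq : (1 <= x)%N -> (1 <= y)%N -> ~~ inert s k x -> ~~ inert s k y ->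
  (t23 <= 1)%N -> (pq <= 1)%N ->
  (gidx x = 0%N -> gidx y = 1%N -> (x < y)%N = (t23 == 0%N)) ->
  (gidx x = 1%N -> gidx y = 0%N -> (y < x)%N = (t23 == 0%N)) ->
  (uplus s (k + 4) < uplus s (k + 5))%N = (pq == 0%N) ->
  Fn C (s x) (s y) (piw k x) (piw k y) (piw k (uplus s x)) (piw k (uplus s y))
   = tget (Tt t23 pq (C (s k) (s (k + 1)%N)) (C (s (k + 1)%N) (s k))) (gidx x) (gidx y).
Proof.
move=> hx hy hix hiy ht0 hq0 ht1 ht2 hpq; 
have hxy : (x == y) = (uplus s x == uplus s y).
  by apply/eqP/eqP => [->|/(uplus_inj hs)].
have [hP hQ hPQ] := PQ_facts.
have hpP : piw k (uplus s (k + 4)) = uplus s (k + 4) by apply: pi_out; rewrite /win; lia.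
have hpQ : piw k (uplus s (k + 5)) = uplus s (k + 5) by apply: pi_out; rewrite /win; lia.
have u0 := uplus_w0 hC hs h6; have u1 := uplus_w1 hC hs h6.
have u2 := uplus_w2 hC hs h6; have u3 := uplus_w3 hC hs h6.
have l2 := s2 h6; have l3 := s3 h6; have l4 := s4 h6; have l5 := s5 h6.
case: (classify hx hix) => [[gx hxk ux sx]|[gx hxk ux sx]|[[ex gx]|[ex gx]|[ex gx]]|[[ex gx]|[ex gx]|[ex gx]]];
case: (classify hy hiy) => [[gy hyk uy sy]|[gy hyk uy sy]|[[ey gy]|[ey gy]|[ey gy]]|[[ey gy]|[ey gy]|[ey gy]]];
rewrite gx gy; move: ht1 ht2; rewrite gx gy => ht1 ht2;
try (have {ht1} ht1 := ht1 erefl erefl); try (have {ht2} ht2 := ht2 erefl erefl);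
try (have px : piw k x = x by apply: pi_out; rewrite /win; lia);
try (have py : piw k y = y by apply: pi_out; rewrite /win; lia);
try subst x; try subst y;
rewrite ?ux ?uy ?sx ?sy ?u0 ?u1 ?u2 ?u3 ?l2 ?l3 ?l4 ?l5; rewrite ?ux ?uy in hxy; rewrite ?pik0 ?pik1 ?pik2 ?pik3 ?pik4 ?pik5 ?hpP ?hpQ ?px ?py;
rewrite /tget /Tt /= !FnE ?hdiag /=; apply: Fn0_iso; lia.
Qed.

End S7.

Lemma locmut_agree (b b' : nat -> nat -> int) j p q j' p' q' :
  (p == j) = (p' == j') -> (q == j) = (q' == j') ->
  b p q = b' p' q' -> b p j = b' p' j' -> b j q = b' j' q' -> b j j = b' j' j' ->
  locmut b j p q = locmut b' j' p' q'.
Proof. by rewrite /locmut => -> -> -> -> -> ->. Qed.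

Lemma tget_tmut j T p q : (p < 8)%N -> (q < 8)%N -> tget (tmut j T) p q = locmut (tget T) j p q.
Proof. by move=> hp hq; rewrite /tget /tmut !nth_mkseq. Qed.

Section S8.
Variables (I : finType) (C : I -> I -> int) (s s' : nat -> I) (k : nat).
Hypothesis hC : simple_cartan_matrix C.
Hypothesis hs : inf_often s.
Hypothesis hs' : inf_often s'.
Hypothesis h6 : six_move C k s s'.

Lemma gidx_lt8 x : (1 <= x)%N -> ~~ inert s k x -> (gidx s k x < 8)%N.
Proof.
move=> hx hi; case: (classify hs h6 hx hi) =>
  [[-> _ _ _]|[-> _ _ _]|[[_ ->]|[_ ->]|[_ ->]]|[[_ ->]|[_ ->]|[_ ->]]] //.
Qed.

Lemma gidx_inj x y : (1 <= x)%N -> (1 <= y)%N -> ~~ inert s k x -> ~~ inert s k y ->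
  gidx s k x = gidx s k y -> x = y.
Proof.
move=> hx hy hix hiy.
case: (classify hs h6 hx hix) =>
  [[gx _ ux _]|[gx _ ux _]|[[ex gx]|[ex gx]|[ex gx]]|[[ex gx]|[ex gx]|[ex gx]]];
case: (classify hs h6 hy hiy) =>
  [[gy _ uy _]|[gy _ uy _]|[[ey gy]|[ey gy]|[ey gy]]|[[ey gy]|[ey gy]|[ey gy]]];
rewrite gx gy // => _; try (by rewrite ex ey);
apply: (uplus_inj hs); by rewrite ux uy.
Qed.

Lemma win_noninert j : (k <= j <= k + 5)%N -> ~~ inert s k j.
Proof. by move=> h; rewrite /inert /win h. Qed.

Lemma gidx_w j : (j <= 5)%N -> gidx s k (k + j) = (j + 2)%N.
Proof.
move=> hj; rewrite /gidx /win.
have -> : (k <= k + j <= k + 5)%N by lia.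
by rewrite addKn.
Qed.

Section Agree.
Variables (x y : nat).
Hypotheses (hx : (1 <= x)%N) (hy : (1 <= y)%N) (hix : ~~ inert s k x) (hiy : ~~ inert s k y).

Definition inA p := (p == x) || (p == y) || (k <= p <= k + 3)%N.

Lemma inA_facts p : inA p -> (1 <= p)%N /\ ~~ inert s k p.
Proof.
have hk := hk1 h6.
rewrite /inA => /orP [/orP [/eqP ->|/eqP ->]|h] //; split; first lia.
by apply: win_noninert; lia.
Qed.

Definition agree (b : nat -> nat -> int) T :=
  forall p q, inA p -> inA q -> b p q = tget T (gidx s k p) (gidx s k q).

Lemma agree_step b T j : inA j -> agree b T -> agree (mutate j b) (tmut (gidx s k j) T).
Proof.
move=> hj hag p q hp hq.
have [j1 ij] := inA_facts hj; have [p1 ip] := inA_facts hp; have [q1 iq] := inA_facts hq.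
rewrite mutate_loc // tget_tmut; try exact: gidx_lt8.
apply: locmut_agree; try exact: hag.
- by apply/eqP/eqP => [->|/gidx_inj]; [|apply].
- by apply/eqP/eqP => [->|/gidx_inj]; [|apply].
Qed.

End Agree.

End S8.

Lemma int_prod3 (a b : int) : a <= 0 -> b <= 0 -> b * a = 3 ->
  (a = -1 /\ b = -3) \/ (a = -3 /\ b = -1).
Proof.
case: a => [n|n]; case: b => [m|m] //=.
- move=> h1 h2; have -> : n = 0%N by move: h1; rewrite lez_nat; lia.
  by rewrite mulr0.
- move=> h1 _; have -> : n = 0%N by move: h1; rewrite lez_nat; lia.
  by rewrite mulr0.
- move=> _ h2; have -> : m = 0%N by move: h2; rewrite lez_nat; lia.
  by rewrite mul0r.
- move=> _ _; rewrite !NegzE mulrNN -PoszM => /eqP; rewrite eqz_nat => /eqP h.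
  have : (n = 0 /\ m = 2 \/ n = 2 /\ m = 0)%N by nia.
  by case=> [[-> ->]|[-> ->]]; [left|right].
Qed.

Section S9.
Variables (I : finType) (C : I -> I -> int) (s s' : nat -> I) (k : nat).
Hypothesis hC : simple_cartan_matrix C.
Hypothesis hs : inf_often s.
Hypothesis hs' : inf_often s'.
Hypothesis h6 : six_move C k s s'.

Lemma cab_cases : (C (s k) (s (k + 1)%N) = -1 /\ C (s (k + 1)%N) (s k) = -3) \/
                  (C (s k) (s (k + 1)%N) = -3 /\ C (s (k + 1)%N) (s k) = -1).
Proof.
have hab := ab_neq hC h6.
case: hC => _ [_ hneg _ _ _].
apply: int_prod3; [apply: hneg => // | apply: hneg; by rewrite eq_sym | by case: h6].
Qed.

Definition tsel x y : nat :=
  if (gidx s k x == 0%N) && (gidx s k y == 1%N) then (if (x < y)%N then 0 else 1)%N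
  else if (gidx s k x == 1%N) && (gidx s k y == 0%N) then (if (y < x)%N then 0 else 1)%N else 0%N.

Lemma tsel_le1 x y : (tsel x y <= 1)%N.
Proof. by rewrite /tsel; repeat case: ifP. Qed.

Lemma inA_cases x y p : inA k x y p -> p = x \/ p = y \/ (2 <= gidx s k p)%N.
Proof.
rewrite /inA => /orP [/orP [/eqP ->|/eqP ->]|h]; [by left|by right; left|right; right].
have -> : p = (k + (p - k))%N by lia.
rewrite gidx_w; lia.
Qed.

Lemma tsel_ok x y p q : inA k x y p -> inA k x y q ->
  gidx s k p = 0%N -> gidx s k q = 1%N -> (p < q)%N = (tsel x y == 0%N).
Proof.
move=> hp hq gp gq.
case: (inA_cases hp) => [ep|[ep|]]; last by rewrite gp.
all: case: (inA_cases hq) => [eq|[eq|]]; last (by rewrite gq); subst p q.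
- by rewrite gq in gp.
- by rewrite /tsel gp gq /=; case: ifP.
- by rewrite /tsel gp gq /=; case: ifP.
- by rewrite gq in gp.
Qed.

Definition pqsel : nat := if (uplus s (k + 4) < uplus s (k + 5))%N then 0%N else 1%N.

Lemma pqsel_ok : (uplus s (k + 4) < uplus s (k + 5))%N = (pqsel == 0%N).
Proof. by rewrite /pqsel; case: ifP. Qed.

Lemma pqsel_le1 : (pqsel <= 1)%N.
Proof. by rewrite /pqsel; case: ifP. Qed.


Lemma main_noninert x y : (1 <= x)%N -> (1 <= y)%N -> ~~ inert s k x -> ~~ inert s k y ->
  Mut10 k (exch_matrix C s) x y =
  Fn C (s x) (s y) (piw k x) (piw k y) (piw k (uplus s x)) (piw k (uplus s y)).
Proof.
move=> hx hy hix hiy.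
have hk := hk1 h6.
set t := tsel x y; set q := pqsel.
set ca := C (s k) (s (k + 1)%N); set cb := C (s (k + 1)%N) (s k).
have a0 : agree s k x y (exch_matrix C s) (T0 t q ca cb).
  move=> p r hp hr.
  have [p1 ip] := inA_facts h6 hx hy hix hiy hp.
  have [r1 ir] := inA_facts h6 hx hy hix hiy hr.
  apply: (agree0 hC hs h6) => //; [exact: tsel_le1|exact: pqsel_le1|exact: tsel_ok|
     move=> g1 g2; exact: (tsel_ok hr hp g2 g1)|exact: pqsel_ok].
have i0 : inA k x y k by rewrite /inA; apply/orP; right; lia.
have i1 : inA k x y (k + 1) by rewrite /inA; apply/orP; right; lia.
have i2 : inA k x y (k + 2) by rewrite /inA; apply/orP; right; lia.
have i3 : inA k x y (k + 3) by rewrite /inA; apply/orP; right; lia.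
have ix : inA k x y x by rewrite /inA eqxx.
have iy : inA k x y y by rewrite /inA eqxx !orbT.
have st := agree_step hs h6 hx hy hix hiy.
have a10 := st _ _ _ i0 (st _ _ _ i3 (st _ _ _ i2 (st _ _ _ i0 (st _ _ _ i1
   (st _ _ _ i3 (st _ _ _ i0 (st _ _ _ i2 (st _ _ _ i1 (st _ _ _ i0 a0))))))))).
have g0 : gidx s k k = 2%N by have := gidx_w s k (j:=0); rewrite addn0; apply.
have g1 : gidx s k (k + 1) = 3%N by apply: gidx_w.
have g2 : gidx s k (k + 2) = 4%N by apply: gidx_w.
have g3 : gidx s k (k + 3) = 5%N by apply: gidx_w.
rewrite /Mut10 a10 // g0 g1 g2 g3.
rewrite -/(MutM (T0 t q ca cb)) model_ok; [|exact: tsel_le1|exact: pqsel_le1|exact: cab_cases].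
symmetry; apply: (agreeT hC hs h6) => //; [exact: tsel_le1|exact: pqsel_le1|exact: tsel_ok|
     move=> g4 g5; exact: (tsel_ok iy ix g5 g4)|exact: pqsel_ok].
Qed.

End S9.

Lemma core (I : finType) (C : I -> I -> int) (s s' : nat -> I) (k : nat) :
  simple_cartan_matrix C -> inf_often s -> six_move C k s s' ->
  forall x y, (1 <= x)%N -> (1 <= y)%N ->
  Fn C (s x) (s y) (piw k x) (piw k y) (piw k (uplus s x)) (piw k (uplus s y)) =
  Mut10 k (exch_matrix C s) x y.
Proof.
move=> hC hs h6 x y hx hy.
case hix: (inert s k x).
  have [e1 _] := Mut10_inert hC hs h6 hx hix hy.
  rewrite e1 exch_Fn //; move/andP: hix => [w1 w2]; exact: Fn_inert_l.
case hiy: (inert s k y).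
  have [_ e2] := Mut10_inert hC hs h6 hy hiy hx.
  rewrite e2 exch_Fn //; move/andP: hiy => [w1 w2]; exact: Fn_inert_r.
by rewrite (main_noninert hC hs h6 hx hy) ?hix ?hiy.
Qed.

Unset Implicit Arguments.

Theorem lemma3p11 (I : finType) (C : I -> I -> int) (s s' : nat -> I) (k : nat) :
  simple_cartan_matrix C ->
  inf_often s -> inf_often s' ->
  six_move C k s s' ->
  forall u v : nat, (1 <= u)%N -> (1 <= v)%N ->
    exch_matrix C s' u v =
    perm_act (k + 4) (perm_act (k + 2) (perm_act k
      (mutate k (mutate (k + 3) (mutate (k + 2) (mutate k (mutate (k + 1)
        (mutate (k + 3) (mutate k (mutate (k + 2) (mutate (k + 1) (mutate k
          (exch_matrix C s))))))))))))) u v.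
Proof.
move=> hC hs hs' h6 u v hu hv.
have hk := hk1 h6.
suff : exch_matrix C s' u v = Mut10 k (exch_matrix C s) (piw k u) (piw k v) by [].
rewrite (@exch_s' _ _ _ _ _ hC hs hs' h6 _ _ hu hv).
rewrite -(core hC hs h6 (pi_ge1 hk hu) (pi_ge1 hk hv)) !pi_invol.
by [].
Qed.
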